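(* Let $Q_1,Q_2$ be strongly connected quivers with $Q_1\subset Q_2$ (i.e. $V(Q_1)\subset V(Q_2)$ and $A(Q_1)\subset A(Q_2)$). Then $\#A(Q_2)-\#A(Q_1)\geq \#V(Q_2)-\#V(Q_1)+1$.
   Context: A quiver is a finite oriented graph with vertex set $V(\cdot)$ and arrow set $A(\cdot)$. A quiver is strongly connected if there is a closed (oriented) path in it passing through all its vertices. *)

(* Defs.v *)
From mathcomp Require Import all_boot all_order all_algebra.
Set Implicit Arguments. Unset Strict Implicit. Unset Printing Implicit Defensive.

(* Quivers are modelled inside an ambient finite "universe": a finite type of
   vertices [V], a finite type of arrows [A] and source/target maps
   [src tgt : A -> V].  A quiver is a pair (VS, AS) of a set of vertices and a
   set of arrows whose endpoints lie in VS.  Parallel arrows and loops are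
   allowed (arrows are elements of A, not pairs of vertices). *)

Section Quiver.
Variables (V A : finType) (src tgt : A -> V).

Definition is_quiver (VS : {set V}) (AS : {set A}) : bool :=
  [forall a in AS, (src a \in VS) && (tgt a \in VS)].

Fixpoint walk (v : V) (p : seq A) (w : V) : bool :=
  match p with
  | [::] => v == w
  | a :: p' => (src a == v) && walk (tgt a) p' w
  end.

Definition strongly_connected (VS : {set V}) (AS : {set A}) : Prop :=
  exists v : V, exists p : seq A,
    [/\ v \in VS, all (fun a => a \in AS) p, walk v p v &
        forall x, x \in VS -> (x == v) || has (fun a => src a == x) p].

End Quiver.

(* Main.v *)
Require Import Defs.
From mathcomp Require Import all_boot all_order all_algebra.
From mathcomp Require Import zify.
Local Open Scope ring_scope.

Section Aux.
Variables (V A : finType) (src tgt : A -> V).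

Lemma walk_cat_ex u p1 p2 w : walk src tgt u (p1 ++ p2) w ->
  exists m, walk src tgt u p1 m /\ walk src tgt m p2 w.
Proof.
elim: p1 u => [|a p IH] u /=; first by move=> H; exists u.
case/andP=> /eqP Ha /IH [m [H1 H2]]; exists m; by rewrite Ha eqxx H1.
Qed.

Lemma walk_exit (S : {set V}) u p w : walk src tgt u p w -> u \in S -> w \notin S ->
  exists2 a, a \in p & (src a \in S) && (tgt a \notin S).
Proof.
elim: p u => [|a p IH] u /=; first by move=> /eqP -> ->.
case/andP=> /eqP Ha Hw uS wS.
case tS: (tgt a \in S).
  by have [b bp Hb] := IH _ Hw tS wS; exists b => //; rewrite inE bp orbT.
exists a; first by rewrite inE eqxx.
by rewrite Ha uS tS.
Qed.

Lemma cycle_exit (S : {set V}) v p : walk src tgt v p v ->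
  (v \in S -> has (fun a => src a \notin S) p) ->
  (v \notin S -> has (fun a => src a \in S) p) ->
  exists2 a, a \in p & (src a \in S) && (tgt a \notin S).
Proof.
move=> Hw H1 H2.
case vS: (v \in S).
  have /hasP [b bp bS] := H1 vS.
  case/splitPr: bp Hw => p1 p2 /walk_cat_ex [m [Hm1 /= /andP [/eqP Hb _]]].
  have mS : m \notin S by rewrite -Hb.
  have [a ap Ha] := walk_exit S _ _ _ Hm1 vS mS.
  by exists a => //; rewrite mem_cat ap.
have /hasP [b bp bS] := H2 (negbT vS).
case/splitPr: bp Hw => p1 p2 /walk_cat_ex [m [_ Hm2]].
have Hm2' := Hm2; move: Hm2' => /= /andP [/eqP Hb _].
have mS : m \in S by rewrite -Hb.
have [a ap Ha] := walk_exit S _ _ _ Hm2 mS (negbT vS).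
by exists a => //; rewrite mem_cat ap orbT.
Qed.

End Aux.

Theorem lemma2p3 (V A : finType) (src tgt : A -> V)
  (VS1 VS2 : {set V}) (AS1 AS2 : {set A}) :
  is_quiver src tgt VS1 AS1 -> is_quiver src tgt VS2 AS2 ->
  strongly_connected src tgt VS1 AS1 -> strongly_connected src tgt VS2 AS2 ->
  VS1 \subset VS2 -> AS1 \subset AS2 -> (VS1, AS1) != (VS2, AS2) ->
  (#|AS2|%:Z - #|AS1|%:Z >= #|VS2|%:Z - #|VS1|%:Z + 1)%R.
Proof.
move=> Q1 _ [v1 [p1 [v1S _ _ _]]] [v [p [vS Hall Hw Hcov]]] sV sA Hne.
have cA : (#|AS1| + #|AS2 :\: AS1| = #|AS2|)%N.
  by rewrite -(cardsID AS1 AS2) (setIidPr sA).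
have cV : (#|VS1| + #|VS2 :\: VS1| = #|VS2|)%N.
  by rewrite -(cardsID VS1 VS2) (setIidPr sV).
have noA : forall a, a \in AS1 -> src a \in VS1 /\ tgt a \in VS1.
  by move=> a aA; move/forall_inP: Q1 => /(_ a aA) /andP.
case: (set_0Vmem (VS2 :\: VS1)) => [W0|[z zW]].
  have eV : VS1 = VS2.
    apply/eqP; rewrite eqEsubset sV /=; apply/subsetP=> x xV2.
    apply/negPn/negP=> xn; have : x \in VS2 :\: VS1 by rewrite inE xn.
    by rewrite W0 inE.
  have : AS1 \proper AS2.
    rewrite properEneq sA andbT; apply: contra Hne => /eqP ->.
    by rewrite eV.
  move/proper_card=> lt; rewrite W0 cards0 in cV.
  have : (0 < #|AS2 :\: AS1|)%N by lia.
  lia.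
have Hz := zW; rewrite inE in Hz; case/andP: Hz => zn zV2.
have pin : forall a, a \in p -> a \in AS2 by move=> a ap; move/allP: Hall; apply.
have [a0 a0p /andP [sa0 ta0]] : exists2 a, a \in p & (src a \in VS1) && (tgt a \notin VS1).
  apply: (@cycle_exit V A src tgt VS1 v p Hw).
    move=> vS1; move: (Hcov z zV2); case/orP=> [/eqP zv|H].
      by rewrite zv vS1 in zn.
    by apply/hasP; case/hasP: H => a ap /eqP az; exists a; rewrite ?az.
  move=> vn; move: (Hcov v1 (subsetP sV _ v1S)); case/orP=> [/eqP v1v|H].
    by rewrite -v1v v1S in vn.
  by apply/hasP; case/hasP: H => a ap /eqP av; exists a; rewrite ?av.
have a0B : a0 \in AS2 :\: AS1.
  by rewrite inE pin // andbT; apply/negP => /noA [_ ]; rewrite (negPf ta0).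
have sub : (src a0) |: (VS2 :\: VS1) \subset src @: (AS2 :\: AS1).
  apply/subsetP=> x; rewrite in_setU1; case/orP=> [/eqP ->|xW].
    by apply/imsetP; exists a0.
  have Hx := xW; rewrite inE in Hx; case/andP: Hx => xn xV2.
  have [a ap sa] : exists2 a, a \in p & src a = x.
    move: (Hcov x xV2); case/orP=> [/eqP xv|H]; last first.
      by case/hasP: H => a ap /eqP; exists a.
    case: p Hw Hall Hcov pin a0p => [|b p'] //=.
    move=> /andP [/eqP sb _] _ _ _ _; exists b; first by rewrite inE eqxx.
    by rewrite sb xv.
  apply/imsetP; exists a => //.
  by rewrite inE pin // andbT; apply/negP => /noA [ ]; rewrite sa (negPf xn).
have := subset_leq_card sub.
rewrite cardsU1 inE sa0 /= => l1.
have l2 := leq_imset_card src (AS2 :\: AS1).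
have key : (#|VS2 :\: VS1| + 1 <= #|AS2 :\: AS1|)%N.
  by rewrite addnC; apply: leq_trans l1 l2.
rewrite -cA -cV.
move: key; move: (#|VS2 :\: VS1|) (#|AS2 :\: AS1|) (#|AS1|) (#|VS1|) => w b x y k.
clear -k; lia.
Qed.
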